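(* Let $SC_3(x)=\sum_{n\ge0} sc_3(\mathcal{D}_n)x^n$, where $sc_3(\mathcal{D}_n)$ is the number of saturated chains of length 3 in the Dyck lattice $\mathcal{D}_n$. Then $$ SC_3(x)=\sum_{n\ge0}\sum_{\gamma\in\mathcal{D}_n}\big(6\,\#(du,du,du)_\gamma+3\,\#(du,ddu)_\gamma+3\,\#(du,duu)_\gamma+\#(dddu)_\gamma+\#(duuu)_\gamma+2\,\#(dduu)_\gamma+2\,\#(dudu)_\gamma\big)x^n . $$
   Context: A Dyck path of semilength $n$ is a lattice path from $(0,0)$ to $(2n,0)$ with steps $u=(1,1)$ and $d=(1,-1)$ never going below the $x$-axis, identified with a word over $\{u,d\}$. $\mathcal{D}_n$ is the set of Dyck paths of semilength $n$ ordered by containment: $\gamma\le\gamma'$ iff $\gamma$ lies weakly below $\gamma'$. A saturated chain of length $h$ is a sequence $\gamma^{(0)}<\cdots<\gamma^{(h)}$ in which each element covers the previous one. For words $\gamma_1,\ldots,\gamma_k$, $\#(\gamma_1,\ldots,\gamma_k)_\gamma$ denotes the number of sets of pairwise disjoint (non-overlapping) occurrences of the factors $\gamma_1,\ldots,\gamma_k$ in $\gamma$ (occurrences of equal words being unordered); e.g. $\#(du,du,du)_\gamma$ is the number of 3-element sets of valleys of $\gamma$, $\#(du,ddu)_\gamma$ is the number of pairs consisting of an occurrence of $du$ and a non-overlapping occurrence of $ddu$, and $\#(w)_\gamma$ is the number of occurrences of the factor $w$ in $\gamma$. *)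

(* Defs.v *)
(* Dyck paths encoded as boolean words: true = u, false = d. *)
From mathcomp Require Import all_boot all_order all_algebra.
Set Implicit Arguments. Unset Strict Implicit. Unset Printing Implicit Defensive.
Import GRing.Theory Num.Theory.

Definition word (n : nat) : finType := (n.*2).-tuple bool.

Definition height (s : seq bool) (k : nat) : int :=
  ((count id (take k s))%:Z - (count negb (take k s))%:Z)%R.

Definition is_dyck (s : seq bool) : bool :=
  [forall k : 'I_(size s).+1, (0 <= height s k)%R] && (height s (size s) == 0%R).

Definition below (n : nat) (g g' : word n) : bool :=
  [forall k : 'I_(n.*2).+1, (height g k <= height g' k)%R].

Definition sbelow (n : nat) (g g' : word n) : bool :=
  [&& is_dyck g, is_dyck g', below g g' & g != g'].

Definition covers (n : nat) (g g' : word n) : bool :=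
  sbelow g g' && [forall d : word n, ~~ (is_dyck d && sbelow g d && sbelow d g')].

Definition sc3 (n : nat) : nat :=
  #|[set c : word n * word n * word n * word n |
      [&& covers c.1.1.1 c.1.1.2, covers c.1.1.2 c.1.2 & covers c.1.2 c.2]]|.

Definition occ (w s : seq bool) (i : nat) : bool :=
  (i + size w <= size s) && (take (size w) (drop i s) == w).

Definition disj (w1 : seq bool) (i : nat) (w2 : seq bool) (j : nat) : bool :=
  (i + size w1 <= j) || (j + size w2 <= i).

Definition cnt1 (w s : seq bool) : nat :=
  \sum_(i < size s) occ w s i.

(* #(w1,w2)_s for distinct words w1 <> w2: pairs of non-overlapping
   occurrences of w1 and of w2 *)
Definition cnt2 (w1 w2 s : seq bool) : nat :=
  \sum_(i < size s) \sum_(j < size s) [&& occ w1 s i, occ w2 s j & disj w1 i w2 j].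

Definition cnt3 (w s : seq bool) : nat :=
  \sum_(i < size s) \sum_(j < size s) \sum_(k < size s)
    [&& (i < j)%N, (j < k)%N, occ w s i, occ w s j, occ w s k,
        disj w i w j, disj w i w k & disj w j w k].

Definition u := true.
Definition d := false.

Definition weight (s : seq bool) : nat :=
  6 * cnt3 [:: d; u] s
  + 3 * cnt2 [:: d; u] [:: d; d; u] s
  + 3 * cnt2 [:: d; u] [:: d; u; u] s
  + cnt1 [:: d; d; d; u] s
  + cnt1 [:: d; u; u; u] s
  + 2 * cnt1 [:: d; d; u; u] s
  + 2 * cnt1 [:: d; u; d; u] s.

(* Main.v *)
Require Import Defs.
From mathcomp Require Import all_boot all_order all_algebra.
From mathcomp Require Import zify.
Set Implicit Arguments. Unset Strict Implicit. Unset Printing Implicit Defensive.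

Definition at_ (s : seq bool) k := nth false s k.
Definition vl s i : bool := ~~ at_ s i && at_ s i.+1.
Definition nv s : nat := \sum_(0 <= i < size s) vl s i.
Definition flipS s i := mkseq (fun k => if k == i then true else if k == i.+1 then false else at_ s k) (size s).

Arguments at_ : simpl never.

Lemma at_lt s k : at_ s k -> k < size s.
Proof. rewrite /at_; case: ltnP => // H; by rewrite nth_default. Qed.

Lemma size_flipS s i : size (flipS s i) = size s.
Proof. by rewrite size_mkseq. Qed.

Lemma vl_lt s i : vl s i -> i.+1 < size s.
Proof. by case/andP=> _ /at_lt. Qed.

Lemma at_flip s i k : vl s i ->
  at_ (flipS s i) k = if k == i then true else if k == i.+1 then false else at_ s k.
Proof.
move=> V; have Hi := vl_lt V.
rewrite /at_ /flipS; case: (ltnP k (size s)) => Hk.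
  by rewrite nth_mkseq.
rewrite nth_default ?size_mkseq //.
have -> : (k == i) = false by apply/eqP; lia.
have -> : (k == i.+1) = false by apply/eqP; lia.
by rewrite nth_default.
Qed.

Lemma sum_eqc N c (b : bool) : \sum_(0 <= k < N) ((k == c) && b) = (c < N) && b.
Proof.
elim: N => [|N IH]; first by rewrite big_geq.
rewrite big_nat_recr //= IH; clear IH; case: b; rewrite ?andbF ?andbT //.
by rewrite ltnS; case: ltngtP.
Qed.


Ltac deq := repeat match goal with
 | |- context [?a == ?b :> nat] =>
    (have ->: (a == b) = true by apply/eqP; lia) || (have ->: (a == b) = false by apply/eqP; lia) || move: (a == b)
 | |- context [?a <= ?b] =>
    (have ->: (a <= b) = true by lia) || (have ->: (a <= b) = false by lia) || move: (a <= b)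
 end.

Ltac split_pos k i :=
  have [H|[H|[H|[H|[H|[H|[H|[H|H]]]]]]]] :
    k + 3 < i \/ k.+3 = i \/ k.+2 = i \/ k.+1 = i \/ k = i \/ k = i.+1 \/ k = i.+2 \/ k = i.+3 \/ i + 3 < k by lia;
  try subst i; try subst k.

Definition aL s i : bool := (0 < i) && ~~ at_ s i.-1.
Definition bR s i : bool := at_ s i.+2.

Ltac split_pos2 k i :=
  (have [Hk|Hk] : k = 0 \/ 0 < k by lia);
  [ subst k; (have [H|[H|[H|[H|H]]]] : i = 0 \/ i = 1 \/ i = 2 \/ i = 3 \/ 3 < i by lia); try subst i
  | split_pos k i; try subst i; try subst k ].

Ltac case_at := repeat match goal with |- context [at_ ?s ?k] => case: (at_ s k) end.
Ltac fin_pt s A B := rewrite /=; deq; rewrite /= ?A ?B //; by (do ?case); case_at; lia.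

Lemma at_ge s k : size s <= k -> at_ s k = false.
Proof. by move=> H; rewrite /at_ nth_default. Qed.

Lemma sum_eqS N c (b : bool) : \sum_(0 <= k < N) ((k.+1 == c) && b) = [&& 0 < c, c <= N & b].
Proof.
case: c => [|c] /=.
  by rewrite big1_eq.
by under eq_bigr => k _ do rewrite eqSS; rewrite sum_eqc.
Qed.

Lemma sum_eqSS N c (b : bool) : \sum_(0 <= k < N) ((k.+2 == c) && b) = [&& 1 < c, c <= N.+1 & b].
Proof.
case: c => [|[|c]] /=; try by rewrite big1_eq.
by under eq_bigr => k _ do rewrite eqSS; rewrite sum_eqc.
Qed.

Lemma sum_ge N (F : nat -> nat) i : i < N -> F i <= \sum_(0 <= k < N) F k.
Proof. move=> H; rewrite big_mkord (bigD1 (Ordinal H)) //=; exact: leq_addr. Qed.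

Lemma vflip_pt s i k : vl s i -> vl (flipS s i) k + (k == i) =
   vl s k + ((k.+1 == i) && aL s i) + ((k == i.+1) && bR s i).
Proof.
move=> V; rewrite /vl /aL /bR !at_flip //; move: V; rewrite /vl => /andP[/negbTE A B].
split_pos k i; try subst i; try subst k; fin_pt s A B.
Qed.

Lemma vflip s i : vl s i -> nv (flipS s i) + 1 = nv s + aL s i + bR s i.
Proof.
move=> V; have Hi := vl_lt V.
rewrite /nv size_flipS.
have E : \sum_(0 <= k < size s) (vl (flipS s i) k + (k == i)) =
  \sum_(0 <= k < size s) (vl s k + ((k.+1 == i) && aL s i) + ((k == i.+1) && bR s i)).
  by apply: eq_bigr => k _; exact: vflip_pt.
rewrite !big_split /= sum_eqS in E.
have E1 : \sum_(0<=k<size s) (k == i) = 1.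
  transitivity (\sum_(0<=k<size s) ((k == i) && true)); first by apply: eq_bigr => k _; rewrite andbT.
  by rewrite sum_eqc andbT (ltn_trans _ Hi).
have E2 := sum_eqc (size s) i.+1 (bR s i).
rewrite E1 E2 in E.
rewrite Hi (ltnW (ltnW Hi)) /= in E; rewrite E /aL.
by case: (0 < i).
Qed.

Definition ddu s := \sum_(0 <= i < size s) vl s i * aL s i.
Definition duu s := \sum_(0 <= i < size s) vl s i * bR s i.

Lemma chain2 y : \sum_(0 <= j < size y) vl y j * nv (flipS y j) + nv y
   = nv y * nv y + ddu y + duu y.
Proof.
have pt : forall j, vl y j * nv (flipS y j) + vl y j =
   vl y j * nv y + vl y j * aL y j + vl y j * bR y j.
  move=> j; case V: (vl y j); rewrite ?mul0n ?mul1n //=.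
  exact: vflip.
rewrite /nv -big_split /= (eq_bigr _ (fun j _ => pt j)) !big_split /= -big_distrl //.
Qed.

Definition gL s i : bool := [&& 1 < i, ~~ at_ s i.-2 & ~~ at_ s i.-1].
Definition hR s i : bool := ~~ at_ s i.+2 && at_ s i.+3.
Definition gL' s i : bool := [&& 1 < i, ~~ at_ s i.-2 & at_ s i.-1].
Definition hR' s i : bool := at_ s i.+2 && at_ s i.+3.

Lemma ddu_pt s i j : vl s i ->
  vl (flipS s i) j * aL (flipS s i) j + ((j == i) && aL s i) =
  vl s j * aL s j + ((j.+1 == i) && gL s i) + ((j == i.+2) && hR s i).
Proof.
move=> V; rewrite /vl /aL /gL /hR !at_flip //; move: V; rewrite /vl => /andP[/negbTE A B].
split_pos2 j i; fin_pt s A B.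
Qed.

Lemma duu_pt s i j : vl s i ->
  vl (flipS s i) j * bR (flipS s i) j + ((j == i) && bR s i) =
  vl s j * bR s j + ((j.+2 == i) && gL' s i) + ((j == i.+1) && hR' s i).
Proof.
move=> V; rewrite /vl /bR /gL' /hR' !at_flip //; move: V; rewrite /vl => /andP[/negbTE A B].
split_pos2 j i; fin_pt s A B.
Qed.

Lemma ddu_flip s i : vl s i -> ddu (flipS s i) + aL s i = ddu s + gL s i + hR s i.
Proof.
move=> V; have Hi := vl_lt V.
have E : \sum_(0 <= k < size s) (vl (flipS s i) k * aL (flipS s i) k + ((k == i) && aL s i)) =
  \sum_(0 <= k < size s) (vl s k * aL s k + ((k.+1 == i) && gL s i) + ((k == i.+2) && hR s i)).
  by apply: eq_bigr => k _; exact: ddu_pt.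
rewrite !big_split /= sum_eqS !sum_eqc in E.
have e0 : (i < size s) && aL s i = aL s i by rewrite (ltn_trans _ Hi).
have e1 : [&& 0 < i, i <= size s & gL s i] = gL s i.
  apply/idP/idP => [/and3P[]//|G]; rewrite (ltnW (ltnW Hi)) G andbT.
  by move: G => /and3P[H _ _]; lia.
have e2 : (i.+2 < size s) && hR s i = hR s i.
  apply/idP/idP => [/andP[]//|H]; rewrite H andbT; move: H => /andP[_ /at_lt]; lia.
by rewrite e0 e1 e2 in E; rewrite /ddu size_flipS.
Qed.

Lemma duu_flip s i : vl s i -> duu (flipS s i) + bR s i = duu s + gL' s i + hR' s i.
Proof.
move=> V; have Hi := vl_lt V.
have E : \sum_(0 <= k < size s) (vl (flipS s i) k * bR (flipS s i) k + ((k == i) && bR s i)) =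
  \sum_(0 <= k < size s) (vl s k * bR s k + ((k.+2 == i) && gL' s i) + ((k == i.+1) && hR' s i)).
  by apply: eq_bigr => k _; exact: duu_pt.
rewrite !big_split /= sum_eqSS !sum_eqc in E.
have e0 : (i < size s) && bR s i = bR s i by rewrite (ltn_trans _ Hi).
have e1 : [&& 1 < i, i <= (size s).+1 & gL' s i] = gL' s i.
  apply/idP/idP => [/and3P[]//|G]; rewrite (_ : i <= (size s).+1) ?G ?andbT; last lia.
  by move: G => /and3P[H _ _].
have e2 : (i.+1 < size s) && hR' s i = hR' s i.
  apply/idP/idP => [/andP[]//|H]; rewrite H andbT; move: H => /andP[_ /at_lt]; lia.
by rewrite e0 e1 e2 in E; rewrite /duu size_flipS.
Qed.

Definition chains s := \sum_(0 <= i < size s) vl s i *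
  \sum_(0 <= j < size (flipS s i)) vl (flipS s i) j * nv (flipS (flipS s i) j).
Definition Dc s := \sum_(0 <= i < size s) vl s i * (aL s i && bR s i).
Definition Gc s := \sum_(0 <= i < size s) vl s i * gL s i.
Definition Hc s := \sum_(0 <= i < size s) vl s i * hR s i.
Definition G'c s := \sum_(0 <= i < size s) vl s i * gL' s i.
Definition H'c s := \sum_(0 <= i < size s) vl s i * hR' s i.

Lemma nv_pos s i : vl s i -> 0 < nv s.
Proof.
move=> V; have Hi := vl_lt V.
have := @sum_ge (size s) (fun k => nat_of_bool (vl s k)) i (ltn_trans (ltnSn _) Hi).
by rewrite V.
Qed.

Lemma chains_eq s : chains s + nv s * (nv s).-1 + ddu s + duu s =
  nv s * ((nv s).-1 * (nv s).-1) + 2 * (nv s).-1 * ddu s + 2 * (nv s).-1 * duu s + 2 * Dc s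
  + nv s * ddu s + nv s * duu s + Gc s + Hc s + G'c s + H'c s.
Proof.
set m := (nv s).-1.
have pt : forall i, vl s i * \sum_(0 <= j < size (flipS s i)) vl (flipS s i) j * nv (flipS (flipS s i) j)
   + vl s i * m + vl s i * aL s i + vl s i * bR s i =
   vl s i * (m * m) + 2 * m * (vl s i * aL s i) + 2 * m * (vl s i * bR s i) + 2 * (vl s i * (aL s i && bR s i))
   + vl s i * ddu s + vl s i * duu s + vl s i * gL s i + vl s i * hR s i + vl s i * gL' s i + vl s i * hR' s i.
  move=> i; case V: (vl s i); last by rewrite !mul0n !muln0.
  rewrite !mul1n.
  have C2 := chain2 (flipS s i).
  have VF := vflip V. have E3 := ddu_flip V. have E4 := duu_flip V.
  have P := nv_pos V.
  have Hm : nv s = m.+1 by rewrite /m; lia.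
  move: C2 VF E3 E4; rewrite Hm.
  move: (\sum_(0 <= j < size (flipS s i)) _) => Q.
  case: (aL s i); case: (bR s i) => /=; nia.
have S : \sum_(0 <= i < size s) (vl s i * \sum_(0 <= j < size (flipS s i)) vl (flipS s i) j * nv (flipS (flipS s i) j)
   + vl s i * m + vl s i * aL s i + vl s i * bR s i) = \sum_(0 <= i < size s) (
   vl s i * (m * m) + 2 * m * (vl s i * aL s i) + 2 * m * (vl s i * bR s i) + 2 * (vl s i * (aL s i && bR s i))
   + vl s i * ddu s + vl s i * duu s + vl s i * gL s i + vl s i * hR s i + vl s i * gL' s i + vl s i * hR' s i).
  by apply: eq_bigr => i _; exact: pt.
rewrite !big_split /= -!big_distrl -!big_distrr /= in S.
rewrite big1_eq addn0 in S.
change (\sum_(0 <= i < size s) vl s i) with (nv s) in S.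
rewrite /chains /Dc /Gc /Hc /G'c /H'c /ddu /duu.
move: S; rewrite -/(ddu s) -/(duu s). nia.
Qed.


Lemma sum0_in N (F : nat -> nat) : (forall i, i < N -> F i = 0) -> \sum_(0 <= i < N) F i = 0.
Proof.
move=> H; rewrite (@eq_big_nat _ _ _ 0 N F (fun _ => 0)) ?big1_eq //;
by move=> i /andP[_ Hi]; apply: H.
Qed.

Lemma sum_in N (F G : nat -> nat) : (forall i, i < N -> F i = G i) ->
  \sum_(0 <= i < N) F i = \sum_(0 <= i < N) G i.
Proof. by move=> H; apply: eq_big_nat => i /andP[_ Hi]; apply: H. Qed.

Definition Vn (f : nat -> bool) N := \sum_(0 <= i < N) f i.
Definition Pn (f : nat -> bool) N := \sum_(0 <= i < N) \sum_(0 <= j < N) [&& i < j, f i & f j].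
Definition Tn (f : nat -> bool) N := \sum_(0 <= i < N) \sum_(0 <= j < N) \sum_(0 <= k < N) [&& i < j, j < k, f i, f j & f k].

Lemma Vn_S (f : nat -> bool) N : Vn f N.+1 = Vn f N + f N.
Proof. by rewrite /Vn big_nat_recr. Qed.

Lemma Pn_S (f : nat -> bool) N : Pn f N.+1 = Pn f N + f N * Vn f N.
Proof.
rewrite /Pn big_nat_recr //= [X in _ + X]sum0_in; last first.
  by move=> j Hj; have -> : (N < j) = false by lia.
rewrite (@sum_in N _ (fun i => \sum_(0 <= j < N) [&& i < j, f i & f j] + (f i && f N))); last first.
  move=> i Hi; rewrite big_nat_recr //= Hi /=; congr (_ + _); by case: (f i).
rewrite big_split /= addn0 /Vn big_distrr /=; congr (_ + _).
by apply: eq_bigr => i _; rewrite mulnb andbC.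
Qed.

Lemma Tn_S (f : nat -> bool) N : Tn f N.+1 = Tn f N + f N * Pn f N.
Proof.
rewrite /Tn big_nat_recr //= [X in _ + X]sum0_in; last first.
  move=> j Hj; apply: sum0_in => k Hk; by have -> : (N < j) = false by lia.
rewrite addn0.
rewrite (@sum_in N _ (fun i => \sum_(0 <= j < N) \sum_(0 <= k < N) [&& i < j, j < k, f i, f j & f k]
     + \sum_(0 <= j < N) [&& i < j, f i, f j & f N])); last first.
  move=> i Hi; rewrite big_nat_recr //= [X in _ + X]sum0_in; last first.
    by move=> k Hk; rewrite (_ : (N < k) = false) ?andbF //; lia.
  rewrite addn0 -big_split; apply: sum_in => j Hj /=.
  by rewrite big_nat_recr //= Hj.
rewrite big_split /= /Pn big_distrr /=; congr (_ + _).
apply: eq_bigr => i _; rewrite big_distrr; apply: eq_bigr => j _ /=.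
by rewrite mulnb; case: (i < j); case: (f i); case: (f j); case: (f N).
Qed.

Lemma Pn_eq (f : nat -> bool) N : 2 * Pn f N + Vn f N = Vn f N * Vn f N.
Proof.
elim: N => [|N IH]; first by rewrite /Pn /Vn !big_geq.
rewrite Pn_S Vn_S; case: (f N) => /=; nia.
Qed.

Lemma Tn_eq (f : nat -> bool) N : 6 * Tn f N + 3 * (Vn f N * Vn f N) = Vn f N * Vn f N * Vn f N + 2 * Vn f N.
Proof.
elim: N => [|N IH]; first by rewrite /Tn /Vn !big_geq.
have HP := @Pn_eq f N.
rewrite Tn_S Vn_S; case: (f N) => /=; nia.
Qed.


Lemma occE' w s i : last false w ->
  occ w s i = (mkseq (fun k => at_ s (i + k)) (size w) == w).
Proof.
move=> Lw; rewrite /occ; case: leqP => H /=.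
  congr (_ == _); apply: (@eq_from_nth _ false).
    by rewrite size_takel ?size_drop ?size_mkseq //; lia.
  move=> k; rewrite size_takel ?size_drop; last lia.
  by move=> Hk; rewrite nth_take // nth_drop nth_mkseq.
apply/esym/negbTE/eqP => E.
have w0 : 0 < size w by move: Lw; case: (w).
have := congr1 (nth false ^~ (size w).-1) E.
rewrite nth_mkseq; last lia.
rewrite nth_last Lw => /at_lt; lia.
Qed.

Ltac occ_tac := rewrite occE' // /mkseq /= /d /u !eqseq_cons ?addn0 ?addn1 ?addn2 ?addn3 ?eqbF_neg ?eqb_id ?andbT.

Lemma occ_du s i : occ [:: d; u] s i = vl s i.
Proof. by occ_tac. Qed.
Lemma occ_ddu s i : occ [:: d; d; u] s i = [&& ~~ at_ s i, ~~ at_ s i.+1 & at_ s i.+2].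
Proof. by occ_tac. Qed.
Lemma occ_duu s i : occ [:: d; u; u] s i = [&& ~~ at_ s i, at_ s i.+1 & at_ s i.+2].
Proof. by occ_tac. Qed.
Lemma occ_dddu s i : occ [:: d; d; d; u] s i = [&& ~~ at_ s i, ~~ at_ s i.+1, ~~ at_ s i.+2 & at_ s i.+3].
Proof. by occ_tac. Qed.
Lemma occ_duuu s i : occ [:: d; u; u; u] s i = [&& ~~ at_ s i, at_ s i.+1, at_ s i.+2 & at_ s i.+3].
Proof. by occ_tac. Qed.
Lemma occ_dduu s i : occ [:: d; d; u; u] s i = [&& ~~ at_ s i, ~~ at_ s i.+1, at_ s i.+2 & at_ s i.+3].
Proof. by occ_tac. Qed.
Lemma occ_dudu s i : occ [:: d; u; d; u] s i = [&& ~~ at_ s i, at_ s i.+1, ~~ at_ s i.+2 & at_ s i.+3].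
Proof. by occ_tac. Qed.

Lemma shift1 N (F : nat -> nat) : F 0 = 0 -> F N = 0 ->
  \sum_(0 <= i < N) F i = \sum_(0 <= i < N) F i.+1.
Proof.
move=> H0 HN.
have h1 := @big_nat_recl _ 0 addn N 0 F (leq0n N).
have h2 := @big_nat_recr _ 0 addn N 0 F (leq0n N).
rewrite h1 H0 HN in h2; move: h2 => /= h2; lia.
Qed.

Lemma cnt1_sum w s : cnt1 w s = \sum_(0 <= i < size s) occ w s i.
Proof. by rewrite /cnt1 big_mkord. Qed.

Lemma vl_ge s k : size s <= k -> vl s k = false.
Proof. by move=> H; rewrite /vl (@at_ge s k.+1) ?andbF // (leqW H). Qed.

Ltac zside := try (by rewrite vl_ge); try (by rewrite vl_ge // leqW); try (by unfold gL, gL', aL; rewrite /= ?andbF ?muln0).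

Lemma W_dddu s : cnt1 [:: d; d; d; u] s = Gc s.
Proof.
rewrite cnt1_sum /Gc [RHS]shift1; zside.
rewrite [RHS]shift1; zside.
apply: eq_bigr => i _; rewrite occ_dddu /vl /gL /=.
by case_at; lia.
Qed.

Lemma W_duuu s : cnt1 [:: d; u; u; u] s = H'c s.
Proof.
rewrite cnt1_sum /H'c; apply: eq_bigr => i _; rewrite occ_duuu /vl /hR' /=.
by case_at; lia.
Qed.

Lemma W_dudu s : cnt1 [:: d; u; d; u] s = Hc s.
Proof.
rewrite cnt1_sum /Hc; apply: eq_bigr => i _; rewrite occ_dudu /vl /hR /=.
by case_at; lia.
Qed.

Lemma W_dudu' s : cnt1 [:: d; u; d; u] s = G'c s.
Proof.
rewrite cnt1_sum /G'c [RHS]shift1; zside.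
rewrite [RHS]shift1; zside.
apply: eq_bigr => i _; rewrite occ_dudu /vl /gL' /=.
by case_at; lia.
Qed.

Lemma W_dduu s : cnt1 [:: d; d; u; u] s = Dc s.
Proof.
rewrite cnt1_sum /Dc [RHS]shift1; zside.
apply: eq_bigr => i _; rewrite occ_dduu /vl /aL /bR /=.
by case_at; lia.
Qed.

Lemma ddu_occ s : ddu s = \sum_(0 <= i < size s) occ [:: d; d; u] s i.
Proof.
rewrite /ddu [LHS]shift1; zside.
apply: eq_bigr => i _; rewrite occ_ddu /vl /aL /=.
by case_at; lia.
Qed.

Lemma duu_occ s : duu s = \sum_(0 <= i < size s) occ [:: d; u; u] s i.
Proof.
rewrite /duu; apply: eq_bigr => i _; rewrite occ_duu /vl /bR /=.
by case_at; lia.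
Qed.

Lemma nv_occ s : nv s = \sum_(0 <= i < size s) occ [:: d; u] s i.
Proof. by rewrite /nv; apply: eq_bigr => i _; rewrite occ_du. Qed.

Ltac pt2 i j := split_pos i j; try subst i; try subst j; rewrite /=; deq; by (do ?case); case_at; lia.

Lemma W2_pt s i j : [&& occ [:: d; u] s i, occ [:: d; d; u] s j & disj [:: d; u] i [:: d; d; u] j]
  + ((i == j.+1) && occ [:: d; d; u] s j) = vl s i * occ [:: d; d; u] s j.
Proof. rewrite occ_du occ_ddu /disj /vl /=; pt2 i j. Qed.

Lemma W3_pt s i j : [&& occ [:: d; u] s i, occ [:: d; u; u] s j & disj [:: d; u] i [:: d; u; u] j]
  + ((i == j) && occ [:: d; u; u] s j) = vl s i * occ [:: d; u; u] s j.
Proof. rewrite occ_du occ_duu /disj /vl /=; pt2 i j. Qed.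

Lemma cnt2_nat w1 w2 s : cnt2 w1 w2 s =
  \sum_(0 <= j < size s) \sum_(0 <= i < size s) [&& occ w1 s i, occ w2 s j & disj w1 i w2 j].
Proof.
rewrite /cnt2 -(big_mkord xpredT (fun i => \sum_(j < size s) [&& occ w1 s i, occ w2 s j & disj w1 i w2 j])).
under eq_bigr => i _ do rewrite -(big_mkord xpredT (fun j => nat_of_bool [&& occ w1 s i, occ w2 s j & disj w1 i w2 j])).
by rewrite exchange_big_nat.
Qed.

Lemma W2 s : cnt2 [:: d; u] [:: d; d; u] s + ddu s = ddu s * nv s.
Proof.
rewrite cnt2_nat ddu_occ -big_split /= big_distrl /=.
apply: eq_bigr => j _.
have E : \sum_(0 <= i < size s) ([&& occ [:: d; u] s i, occ [:: d; d; u] s j & disj [:: d; u] i [:: d; d; u] j]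
  + ((i == j.+1) && occ [:: d; d; u] s j)) = \sum_(0 <= i < size s) vl s i * occ [:: d; d; u] s j.
  by apply: eq_bigr => i _; exact: W2_pt.
rewrite big_split /= sum_eqc -big_distrl /= -/(nv s) in E.
rewrite mulnC -E; congr (_ + _).
case O: (occ _ s j); rewrite ?andbF ?andbT //; apply/esym.
move: O; rewrite occ_ddu => /and3P[_ _ /at_lt]; lia.
Qed.

Lemma W3 s : cnt2 [:: d; u] [:: d; u; u] s + duu s = duu s * nv s.
Proof.
rewrite cnt2_nat duu_occ -big_split /= big_distrl /=.
apply: eq_bigr => j _.
have E : \sum_(0 <= i < size s) ([&& occ [:: d; u] s i, occ [:: d; u; u] s j & disj [:: d; u] i [:: d; u; u] j]
  + ((i == j) && occ [:: d; u; u] s j)) = \sum_(0 <= i < size s) vl s i * occ [:: d; u; u] s j.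
  by apply: eq_bigr => i _; exact: W3_pt.
rewrite big_split /= sum_eqc -big_distrl /= -/(nv s) in E.
rewrite mulnC -E; congr (_ + _).
case O: (occ _ s j); rewrite ?andbF ?andbT //; apply/esym.
move: O; rewrite occ_duu => /and3P[_ _ /at_lt]; lia.
Qed.

Lemma vl_sep s i j : vl s i -> vl s j -> i < j -> i + 2 <= j.
Proof.
move=> /andP[_ A] /andP[B _] H.
case: (eqVneq j i.+1) => [E|E]; last by move/eqP: E; lia.
by rewrite E A in B.
Qed.

Lemma W1 s : 6 * cnt3 [:: d; u] s + 3 * (nv s * nv s) = nv s * nv s * nv s + 2 * nv s.
Proof.
have -> : cnt3 [:: d; u] s = Tn (vl s) (size s).
  rewrite /cnt3 /Tn.
  rewrite -(big_mkord xpredT (fun i => \sum_(j < size s) \sum_(k < size s) nat_of_bool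
    [&& i < j, j < k, occ [:: d; u] s i, occ [:: d; u] s j, occ [:: d; u] s k,
        disj [:: d; u] i [:: d; u] j, disj [:: d; u] i [:: d; u] k & disj [:: d; u] j [:: d; u] k])).
  apply: eq_bigr => i _.
  rewrite -(big_mkord xpredT (fun j => \sum_(k < size s) nat_of_bool
    [&& i < j, j < k, occ [:: d; u] s i, occ [:: d; u] s j, occ [:: d; u] s k,
        disj [:: d; u] i [:: d; u] j, disj [:: d; u] i [:: d; u] k & disj [:: d; u] j [:: d; u] k])).
  apply: eq_bigr => j _.
  rewrite -(big_mkord xpredT (fun k => nat_of_bool
    [&& i < j, j < k, occ [:: d; u] s i, occ [:: d; u] s j, occ [:: d; u] s k,
        disj [:: d; u] i [:: d; u] j, disj [:: d; u] i [:: d; u] k & disj [:: d; u] j [:: d; u] k])).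
  apply: eq_bigr => k _.
  rewrite !occ_du /disj /=; congr nat_of_bool.
  apply/idP/idP.
    by move=> /and5P[-> -> -> -> /andP[-> _]].
  move=> /and5P[Hij Hjk Vi Vj Vk].
  rewrite Hij Hjk Vi Vj Vk (vl_sep Vi Vj Hij) (vl_sep Vj Vk Hjk) /=.
  by have := vl_sep Vi Vj Hij; rewrite (_ : i + 2 <= k) //; lia.
exact: Tn_eq.
Qed.

Lemma sum_vl_le s (c : nat -> bool) : \sum_(0 <= i < size s) vl s i * c i <= nv s.
Proof. by apply: leq_sum => i _; case: (c i); rewrite ?muln1 ?muln0. Qed.

Lemma weight_chains s : weight s = chains s.
Proof.
have C := chains_eq s. have w1 := W1 s. have w2 := W2 s. have w3 := W3 s.
have e1 := W_dudu' s. rewrite W_dudu in e1.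
have b1 : ddu s <= nv s by apply: sum_vl_le.
have b2 : duu s <= nv s by apply: sum_vl_le.
have b3 : Dc s <= nv s by apply: sum_vl_le.
have b4 : Gc s <= nv s by apply: sum_vl_le.
have b5 : Hc s <= nv s by apply: sum_vl_le.
have b6 : H'c s <= nv s by apply: sum_vl_le.
rewrite /weight W_dddu W_duuu W_dduu W_dudu.
rewrite -e1 in C.
move: C w1 w2 w3 b1 b2 b3 b4 b5 b6.
move: (chains s) (cnt3 _ s) (cnt2 _ _ s) (cnt2 _ _ s) (ddu s) (duu s) (Dc s) (Gc s) (Hc s) (H'c s) => ch c3 c2a c2b A B D G H H'.
case: (nv s) => [|m] /=; nia.
Qed.

Import GRing.Theory Num.Theory.

Lemma height0 s : height s 0 = 0%R.
Proof. by rewrite /height take0. Qed.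

Lemma heightE s k : height s k = ((2 * count id (take k s))%:Z - (size (take k s))%:Z)%R.
Proof.
rewrite /height; have := count_predC id (take k s).
rewrite (@eq_count _ (predC id) negb) //; lia.
Qed.

Lemma height_over s k : size s <= k -> height s k = height s (size s).
Proof. by move=> H; rewrite /height take_oversize ?take_size. Qed.

Lemma heightS s k : height s k.+1 =
  (height s k + (if (k < size s)%N then (if at_ s k then 1 else -1) else 0))%R.
Proof.
case: ltnP => H.
  rewrite /height (take_nth false H) -cats1 !count_cat /= /at_.
  case: (nth false s k) => /=; lia.
rewrite addr0 !height_over //; lia.
Qed.

Lemma height_inj s t : size s = size t -> (forall k, height s k = height t k) -> s = t.
Proof.
move=> Hs H; apply: (@eq_from_nth _ false) => // k Hk.
have := H k.+1; rewrite !heightS H -Hs Hk -/(at_ s k) -/(at_ t k).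
case: (at_ s k); case: (at_ t k) => //=; lia.
Qed.

Lemma height_flip s i k : vl s i ->
  height (flipS s i) k = (height s k + (if k == i.+1 then 2 else 0))%R.
Proof.
move=> V; have Hi := vl_lt V; move: (V) => /andP[/negbTE A B].
elim: k => [|k IH]; first by rewrite !height0.
rewrite !heightS IH size_flipS at_flip // eqSS.
case: (eqVneq k i) => [->|n1].
  rewrite (ltn_trans _ Hi) // A (_ : (i == i.+1) = false); last by apply/eqP; lia.
  lia.
case: (eqVneq k i.+1) => [->|n2].
  have -> : (i.+1 < size s)%N = true by []. rewrite B; lia.
by move: (if _ then _ else _) => X; lia.
Qed.

Lemma dyckP s : reflect ((forall k, (0 <= height s k)%R) /\ height s (size s) = 0%R) (is_dyck s).
Proof.
apply: (iffP andP) => [[/forallP H /eqP E]|[H E]]; split => //.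
- move=> k; case: (leqP k (size s)) => Hk.
    by have := H (Ordinal (n := (size s).+1) (m := k) Hk).
  by rewrite height_over ?(ltnW Hk) // E.
- by apply/forallP.
- by apply/eqP.
Qed.

Lemma belowP n (g g' : word n) : reflect (forall k, (height g k <= height g' k)%R) (below g g').
Proof.
apply: (iffP forallP) => [H k|H k //].
case: (leqP k n.*2) => Hk.
  by have := H (Ordinal (n := n.*2.+1) (m := k) Hk).
rewrite !height_over ?size_tuple ?(ltnW Hk) //.
by have := H (Ordinal (n := n.*2.+1) (m := n.*2) (ltnSn _)).
Qed.

Lemma height_par s t k : size s = size t -> exists z : int, height t k = (height s k + 2 * z)%R.
Proof.
move=> Hs; exists ((count id (take k t))%:Z - (count id (take k s))%:Z)%R.
rewrite !heightE !size_take Hs; lia.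
Qed.

Lemma dyck_flip s i : is_dyck s -> vl s i -> is_dyck (flipS s i).
Proof.
move=> /dyckP[H E] V; apply/dyckP; split.
  by move=> k; rewrite height_flip //; have := H k; case: ifP => _; lia.
rewrite size_flipS height_flip // E.
have Hi := vl_lt V.
by rewrite (_ : (size s == i.+1) = false) //; apply/eqP; lia.
Qed.

Lemma flipT_proof n (t : word n) i : size (flipS t i) == n.*2.
Proof. by rewrite size_flipS size_tuple. Qed.

Definition flipT n (t : word n) i : word n := Tuple (flipT_proof t i).

Lemma flipTE n (t : word n) i : val (flipT t i) = flipS t i.
Proof. by []. Qed.

Lemma tuple_heq n (a b : word n) : (forall k, height a k = height b k) -> a = b.
Proof. by move=> H; apply: val_inj; apply: height_inj; rewrite ?size_tuple. Qed.

Lemma covers_flip n (g : word n) i : is_dyck g -> vl g i -> covers g (flipT g i).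
Proof.
move=> Dg V.
have Df : is_dyck (flipT g i) by rewrite flipTE dyck_flip.
have Bf : forall k, (height g k <= height (flipT g i) k)%R.
  by move=> k; rewrite flipTE height_flip //; case: ifP => _; lia.
have Ne : g != flipT g i.
  apply/eqP => E; have := height_flip (i.+1) V; rewrite -flipTE -E eqxx /=; lia.
apply/andP; split.
  by rewrite /sbelow Dg Df Ne andbT /=; apply/belowP.
apply/forallP => t; apply/negP => /andP[/andP[Dt /and4P[_ _ /belowP B1 N1]] /and4P[_ _ /belowP B2 N2]].
have [z Hz] := @height_par g t (i.+1) (etrans (size_tuple g) (esym (size_tuple t))).
have := B1 i.+1; have := B2 i.+1; rewrite flipTE height_flip // eqxx Hz => h1 h2.
have [Z|Z] : z = 0%R \/ z = 1%R by lia.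
- move/eqP: N1; apply; apply: tuple_heq => k.
  have := B1 k; have := B2 k; rewrite flipTE height_flip //.
  by case: eqP => [->|_]; rewrite ?Hz ?Z; lia.
- move/eqP: N2; apply; apply: tuple_heq => k.
  have := B1 k; have := B2 k; rewrite flipTE height_flip //.
  by case: eqP => [->|_]; rewrite ?Hz ?Z; lia.
Qed.

Lemma gap_start s t k : size s = size t -> (height s k < height t k)%R ->
  exists a, [/\ a < k, at_ s a = false & (height s a.+1 < height t a.+1)%R].
Proof.
move=> Hs; elim: k => [|k IH]; first by rewrite !height0.
case E: (at_ s k) => H; last by exists k.
have Hk := at_lt E.
have [a [Ha A Ha']] : exists a, [/\ a < k, at_ s a = false & (height s a.+1 < height t a.+1)%R].
  apply: IH; move: H; rewrite !heightS -Hs Hk E.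
  by case: (at_ t k); lia.
by exists a; split => //; apply: ltn_trans Ha _.
Qed.

Lemma dyck_end s k : is_dyck s -> size s <= k -> height s k = 0%R.
Proof. by move=> /dyckP[_ E] H; rewrite height_over. Qed.

Lemma gap_valley s t a : is_dyck s -> is_dyck t -> size s = size t ->
  at_ s a = false -> (height s a.+1 < height t a.+1)%R ->
  exists p, vl s p /\ (height s p.+1 < height t p.+1)%R.
Proof.
move=> Ds Dt Hs.
move: (leqnn (size s - a)); move: {2}(size s - a) => m.
elim: m a => [|m IH] a Hm A H.
  rewrite (dyck_end Ds) ?(dyck_end Dt) -?Hs in H; lia.
case E: (at_ s a.+1).
  by exists a; rewrite /vl A E.
case: (ltnP a.+1 (size s)) => Ha; last first.
  rewrite (dyck_end Ds) ?(dyck_end Dt) -?Hs in H; lia.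
apply: (IH a.+1) => //; first lia.
move: H; rewrite !(heightS _ a.+1) -Hs Ha E.
by case: (at_ t a.+1); lia.
Qed.

Lemma covers_inv n (g g' : word n) : covers g g' -> exists2 i, vl g i & g' = flipT g i.
Proof.
move=> /andP[/and4P[Dg Dg' /belowP B Ne] /forallP Nb].
have Hs : size g = size g' by rewrite !size_tuple.
have [k Hk] : exists k, (height g k < height g' k)%R.
  case: (boolP [exists k : 'I_(n.*2).+1, (height g k < height g' k)%R]) => [/existsP[k Hk]|].
    by exists k.
  move=> /negP Hn.
  have Hall : forall k, k <= n.*2 -> height g k = height g' k.
    move=> k Hk; have := B k.
    have : ~~ (height g k < height g' k)%R.
      by apply/negP => Hlt; apply: Hn; apply/existsP; exists (Ordinal (n := n.*2.+1) (m := k) Hk).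
    lia.
  case/eqP: Ne; apply: tuple_heq => k.
  case: (leqP k n.*2) => Hk; first exact: Hall.
  by rewrite !height_over ?size_tuple ?(ltnW Hk) // Hall.
have [a [_ A Ha]] := gap_start Hs Hk.
have [p [V Hp]] := gap_valley Dg Dg' Hs A Ha.
exists p => //.
have [z Hz] := @height_par g g' (p.+1) Hs.
have Bf : below (flipT g p) g'.
  apply/belowP => j; rewrite flipTE height_flip //.
  case: eqP => [->|_]; last by rewrite addr0.
  by move: Hp; rewrite Hz; lia.
case: (eqVneq g' (flipT g p)) => // Nf.
have := Nb (flipT g p).
have /andP[Sb _] := covers_flip Dg V.
have Df : is_dyck (flipT g p) by rewrite flipTE dyck_flip.
by rewrite Df Sb /sbelow Df Dg' Bf eq_sym Nf.
Qed.


Lemma flip_inj n (g : word n) i j : vl g i -> vl g j -> flipT g i = flipT g j -> i = j.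
Proof.
move=> Vi Vj E; case: (eqVneq i j) => // Nij; exfalso.
have := congr1 (fun t : word n => at_ t i) E; rewrite /= (at_flip _ Vi) (at_flip _ Vj) // eqxx (negbTE Nij).
move: Vi => /andP[/negbTE A _]; by case: ifP; rewrite ?A.
Qed.

Lemma covers_sum n (g g' : word n) : is_dyck g ->
  (covers g g' : nat) = \sum_(0 <= i < n.*2) (vl g i && (g' == flipT g i)).
Proof.
move=> Dg; case C: (covers g g').
  have [i0 V E] := covers_inv C.
  have Hi0 : i0 < n.*2 by have := vl_lt V; rewrite size_tuple; lia.
  transitivity (\sum_(0 <= i < n.*2) ((i == i0) && true)); first by rewrite sum_eqc Hi0.
  apply: eq_bigr => i _; rewrite andbT; apply/esym.
  case: (eqVneq i i0) => [->|Ne]; first by rewrite V E eqxx.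
  case V': (vl g i) => //=.
  suff -> : (g' == flipT g i) = false by [].
  apply/negbTE/eqP => E'.
  by move/eqP: Ne; apply; apply: (flip_inj V' V); rewrite -E'.
rewrite sum0_in // => i _; case V: (vl g i) => //=.
case: eqP => // E; move: C; rewrite E covers_flip //.
Qed.

Lemma sum_cov n (g : word n) (F : word n -> nat) : is_dyck g ->
  \sum_(g' : word n) covers g g' * F g' = \sum_(0 <= i < n.*2) vl g i * F (flipT g i).
Proof.
move=> Dg.
under eq_bigr => g' _ do rewrite covers_sum // big_distrl.
rewrite exchange_big /=; apply: eq_bigr => i _.
rewrite (bigD1 (flipT g i)) //= eqxx andbT big1 ?addn0 // => g' /negbTE ->.
by rewrite andbF.
Qed.

Lemma sum_quad (T : finType) (f : T -> T -> T -> T -> nat) :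
  \sum_(c : T * T * T * T) f c.1.1.1 c.1.1.2 c.1.2 c.2 =
  \sum_(a : T) \sum_(b : T) \sum_(c : T) \sum_(d : T) f a b c d.
Proof.
rewrite -(pair_bigA _ (fun p d => f p.1.1 p.1.2 p.2 d)) /=.
rewrite -(pair_bigA _ (fun p c => \sum_(d : T) f p.1 p.2 c d)) /=.
by rewrite -(pair_bigA _ (fun a b => \sum_(c : T) \sum_(d : T) f a b c d)).
Qed.

Theorem mainTheorem6 (n : nat) :
  sc3 n = \sum_(g : word n | is_dyck g) weight g.
Proof.
have E1 : sc3 n = \sum_(c : word n * word n * word n * word n)
   [&& covers c.1.1.1 c.1.1.2, covers c.1.1.2 c.1.2 & covers c.1.2 c.2].
  rewrite /sc3 -sum1_card big_mkcond /=; apply: eq_bigr => c _.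
  by rewrite in_set; case: [&& _, _ & _].
rewrite E1 (sum_quad (fun a b c d => nat_of_bool [&& covers a b, covers b c & covers c d])) [RHS]big_mkcond /=; apply: eq_bigr => g0 _.
case D: (is_dyck g0); last first.
  apply: big1 => g1 _; apply: big1 => g2 _; apply: big1 => g3 _.
  by rewrite /covers /sbelow D.
rewrite weight_chains.
transitivity (\sum_(g1 : word n) covers g0 g1 * \sum_(g2 : word n) covers g1 g2 *
                \sum_(g3 : word n) covers g2 g3 * 1).
  apply: eq_bigr => g1 _; rewrite big_distrr; apply: eq_bigr => g2 _ /=.
  rewrite !big_distrr; apply: eq_bigr => g3 _ /=.
  by case: (covers g0 g1); case: (covers g1 g2); case: (covers g2 g3).
rewrite sum_cov // /chains size_tuple.
apply: eq_bigr => i _.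
case V: (vl g0 i); rewrite ?mul0n ?mul1n //.
have D1 : is_dyck (flipT g0 i) by rewrite flipTE dyck_flip.
rewrite sum_cov // size_flipS size_tuple.
apply: eq_bigr => j _.
change (vl (flipT g0 i) j) with (vl (flipS g0 i) j).
case V2: (vl (flipS g0 i) j); rewrite ?mul0n ?mul1n //.
have D2 : is_dyck (flipT (flipT g0 i) j) by exact: dyck_flip D1 V2.
rewrite sum_cov // /nv !size_flipS size_tuple.
by apply: eq_bigr => k _; rewrite muln1.
Qed.
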